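(* Let $\mathcal{S}=\{S_1,\dots,S_N\}\subseteq 2^{[n]}$ be a Sperner family and $h:\mathcal{S}\to 2^{[n]}$ a function with $H_i=h(S_i)\subseteq S_i$ for every $i\in[N]$. If the graph $G_{\mathcal{S},h}$ has a vertex of degree at most $1$, then there exists $S_0\in\mathcal{S}$ such that $\mathcal{Q}_{S_0,h(S_0)}\not\subseteq\bigcup_{S\in\mathcal{S}\setminus\{S_0\}}\mathcal{Q}_{S,h(S)}$.
   Context: $[n]=\{1,\dots,n\}$. A Sperner family is a family of sets none of which is contained in another. For $H\subseteq S\subseteq[n]$, $\mathcal{Q}_{S,H}=\{H\cup B: B\subseteq[n]\setminus S\}$. The graph $G_{\mathcal{S},h}$ has vertex set $\{(S_i,H_i): i\in[N]\}$, and two distinct vertices $(S_i,H_i)$, $(S_j,H_j)$ are adjacent if and only if $S_i\cap H_j=S_j\cap H_i$. *)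

(* Defs.v *)
From mathcomp Require Import all_boot.
Set Implicit Arguments. Unset Strict Implicit. Unset Printing Implicit Defensive.

(* The ground set [n] = {1..n} is represented by 'I_n. *)

Definition sperner (n : nat) (F : {set {set 'I_n}}) : Prop :=
  forall A B, A \in F -> B \in F -> A \subset B -> A = B.

Definition Qfam (n : nat) (S H : {set 'I_n}) : {set {set 'I_n}} :=
  [set H :|: B | B in powerset (~: S)].

Definition Gadj (n : nat) (h : {set 'I_n} -> {set 'I_n}) (S T : {set 'I_n}) : bool :=
  (S != T) && (S :&: h T == T :&: h S).

Definition Gdeg (n : nat) (F : {set {set 'I_n}}) (h : {set 'I_n} -> {set 'I_n})
  (S : {set 'I_n}) : nat :=
  #|[set T in F | Gadj h S T]|.

(* Main.v *)
Require Import Defs.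
From mathcomp Require Import all_boot.

Lemma Qfam_cap n (S H X : {set 'I_n}) : H \subset S -> X \in Qfam S H -> X :&: S = H.
Proof.
move=> HS /imsetP [B]; rewrite inE => BS ->.
rewrite setIUl (setIidPl HS).
have -> : B :&: S = set0.
  apply/setP=> x; rewrite !inE; apply/negbTE; apply/andP=> [[xB xS]].
  by move/subsetP: BS => /(_ x xB); rewrite inE xS.
by rewrite setU0.
Qed.

Lemma Qfam_in n (S H B : {set 'I_n}) : B \subset ~: S -> H :|: B \in Qfam S H.
Proof. by move=> BS; apply/imsetP; exists B; rewrite ?inE. Qed.

Theorem claim19 (n : nat) (F : {set {set 'I_n}}) (h : {set 'I_n} -> {set 'I_n}) :
  sperner F ->
  (forall S, S \in F -> h S \subset S) ->
  (exists2 S, S \in F & Gdeg F h S <= 1) ->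
  exists2 S0, S0 \in F &
    ~~ (Qfam S0 (h S0) \subset \bigcup_(S in F | S != S0) Qfam S (h S)).
Proof.
move=> sp hS [S SF degS]; exists S => //.
set N := [set T in F | Gadj h S T].
have [X XQ XN] : exists2 X, X \in Qfam S (h S) & forall T, T \in N -> X :&: T != h T.
  case: (pickP (fun T => T \in N)) => [T /= TN | N0]; last first.
    exists (h S :|: set0); first by apply: Qfam_in; exact: sub0set.
    by move=> T; move: (N0 T) => /= ->.
  have NT : N = [set T].
    apply/eqP; rewrite eq_sym eqEcard sub1set TN cards1.
    by move: degS; rewrite /Gdeg.
  move: TN; rewrite inE => /andP [TF /andP [neST _]].
  have nTS : ~~ (T \subset S).
    apply/negP=> TS; move: neST; by rewrite (sp T S TF SF TS) eqxx.
  have [t tT tS] := subsetPn nTS.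
  case tH : (t \in h T).
  - exists (h S :|: set0); first by apply: Qfam_in; exact: sub0set.
    move=> T'; rewrite NT inE => /eqP ->; apply/eqP => /setP /(_ t).
    rewrite !inE tH tT andbT orbF => tS'.
    by move/subsetP: (hS S SF) => /(_ t tS'); rewrite (negbTE tS).
  - exists (h S :|: [set t]); first by apply: Qfam_in; rewrite sub1set inE.
    move=> T'; rewrite NT inE => /eqP ->; apply/eqP => /setP /(_ t).
    by rewrite !inE tH tT eqxx orbT.
apply/subsetPn; exists X => //; apply/negP => /bigcupP [T /andP [TF neTS] XT].
have e1 := @Qfam_cap _ _ _ _ (hS S SF) XQ.
have e2 := @Qfam_cap _ _ _ _ (hS T TF) XT.
have TN : T \in N.
  rewrite inE TF /Gadj eq_sym neTS /=; apply/eqP.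
  by rewrite -e1 -e2 !setIA [S :&: X]setIC [T :&: X]setIC -!setIA [S :&: T]setIC.
by move/eqP: (XN T TN).
Qed.
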